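(* Let $G=(V=V_0\uplus V_1,v_{\mathsf{init}},E,\gamma)$ be a quantitative graph game, let $\mu>0$ be the maximum of the absolute values of the costs along transitions, and let $d=\frac pq>1$ be the discount factor with $p,q$ positive integers. Under the bit-cost model, for all $(v,w)\in E$ and all $k>0$, the cost of computing $\mathsf{cost}_k(v,w)$ in the $k$-th iteration (given the values $\mathit{wt}_{k-1}$ of the previous iteration) is $O(k\cdot\log p\cdot\max\{\log\mu,\log p\})$.
   Context: A quantitative graph game $G=(V=V_0\uplus V_1, v_{\mathsf{init}},E,\gamma)$ consists of a finite directed graph $(V,E)$ in which every state has at least one outgoing edge, a partition of $V$ into $V_0$ (maximizing player) and $V_1$ (minimizing player), an initial state, and an integer cost function $\gamma:E\to\mathbb{Z}$. Value iteration defines $\mathit{wt}_1(v)=\max\{\gamma(v,w):(v,w)\in E\}$ for $v\in V_0$ ($\min$ for $v\in V_1$) and $\mathit{wt}_{k+1}(v)=\max\{\gamma(v,w)+\frac1d\mathit{wt}_k(w):(v,w)\in E\}$ for $v\in V_0$ ($\min$ for $v\in V_1$). The transition costs are $\mathsf{cost}_1(v,w)=\gamma(v,w)$ and $\mathsf{cost}_k(v,w)=\gamma(v,w)+\frac1d\mathit{wt}_{k-1}(w)$ for $k>1$. In the bit-cost model, integers are represented in binary, a rational $r/s$ by the pair of binary representations of $r$ and $s$, and adding (resp. multiplying) integers of bit-lengths $n$ and $m$ costs $O(n+m)$ (resp. $O(n\cdot m)$). *)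

(* Defs.v *)
From mathcomp Require Import all_boot all_order all_algebra.
Set Implicit Arguments. Unset Strict Implicit. Unset Printing Implicit Defensive.
Import Order.TTheory GRing.Theory Num.Theory.
Local Open Scope ring_scope.

(* A game is given by: a finite state type V, the set V0 of maximizer states
   (V1 = ~: V0), an initial state, an edge relation E, and an integer cost
   gamma v w (only relevant for E v w). *)

Definition maxabs (V : finType) (E : rel V) (gamma : V -> V -> int) : nat :=
  (\max_(e : V * V | E e.1 e.2) `|gamma e.1 e.2|)%N.

(* some successor of v (used only as seed of the finite max/min) *)
Definition some_succ (V : finType) (E : rel V) (v : V) : V :=
  odflt v [pick w | E v w].

Definition opt_succ (V : finType) (V0 : {set V}) (E : rel V) (v : V)
    (f : V -> rat) : rat :=
  if v \in V0 then \big[Num.max/f (some_succ E v)]_(w | E v w) f w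
  else \big[Num.min/f (some_succ E v)]_(w | E v w) f w.

(* value iteration wt_k, discount factor d = p/q; wt 0 is unused (set to 0) *)
Fixpoint wt (V : finType) (V0 : {set V}) (E : rel V) (gamma : V -> V -> int)
    (p q : nat) (k : nat) : V -> rat :=
  fun v => match k with
  | 0 => 0
  | k'.+1 => opt_succ V0 E v (fun w =>
       if k' is 0 then (gamma v w)%:~R
       else (gamma v w)%:~R + wt V0 E gamma p q k' w / (p%:R / q%:R))
  end.

Definition costk (V : finType) (V0 : {set V}) (E : rel V) (gamma : V -> V -> int)
    (p q : nat) (k : nat) (v w : V) : rat :=
  if k is k'.+2 then (gamma v w)%:~R + wt V0 E gamma p q k'.+1 w / (p%:R / q%:R)
  else (gamma v w)%:~R.

Definition blen (n : nat) : nat := (trunc_log 2 n).+1.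
Definition zlen (z : int) : nat := blen `|z|%N.
Definition add_cost (a b : int) : nat := (zlen a + zlen b)%N.
Definition mul_cost (a b : int) : nat := (zlen a * zlen b)%N.

(* Computation of cost_k(v,w) = gamma + (q/p) * (r/s) in the k-th iteration,
   given wt_{k-1}(w) = r/s as a rational (r = numq, s = denq):
     a := r*q ; b := s*p ; c := gamma*b ; result := (c + a) / b. *)
Definition step_result (g : int) (p q : nat) (x : rat) : int * int :=
  let r := numq x in let s := denq x in
  let a := r * q%:Z in let b := s * p%:Z in let c := g * b in (c + a, b).

Definition step_cost (g : int) (p q : nat) (x : rat) : nat :=
  let r := numq x in let s := denq x in
  let a := r * q%:Z in let b := s * p%:Z in let c := g * b in
  (mul_cost r q%:Z + mul_cost s p%:Z + mul_cost g b + add_cost c a)%N.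

(* the pair computed at iteration k (k = 1: cost_1 = gamma, read off, cost 0) *)
Definition comp_result (V : finType) (V0 : {set V}) (E : rel V)
    (gamma : V -> V -> int) (p q : nat) (k : nat) (v w : V) : int * int :=
  if k is k'.+2 then step_result (gamma v w) p q (wt V0 E gamma p q k'.+1 w)
  else (gamma v w, 1).

Definition comp_cost (V : finType) (V0 : {set V}) (E : rel V)
    (gamma : V -> V -> int) (p q : nat) (k : nat) (v w : V) : nat :=
  if k is k'.+2 then step_cost (gamma v w) p q (wt V0 E gamma p q k'.+1 w)
  else 0%N.

(* Main.v *)
Require Import Defs.
From mathcomp Require Import all_boot all_order all_algebra zify ring lra.
Import Order.TTheory GRing.Theory Num.Theory.
Local Open Scope ring_scope.

Lemma frac_bound (x : rat) (N : int) (D : nat) : (0 < D)%N ->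
  x = N%:~R / D%:R -> (`|denq x| <= D)%N /\ (`|numq x| <= `|N|)%N.
Proof.
move=> D0 hx.
have h : numq x * D%:Z = N * denq x.
  apply: (@intr_inj rat); rewrite !rmorphM /= numqE hx.
  have hD : (D%:R : rat) != 0 by rewrite pnatr_eq0 -lt0n.
  rewrite pmulrn. field; done.
have hn : (`|numq x| * D = `|N| * `|denq x|)%N by have := congr1 absz h; rewrite !abszM.
have hd : (`|denq x| %| D)%N.
  have := coprime_num_den x; rewrite coprime_sym => cop.
  by rewrite -(Gauss_dvdr _ cop) hn dvdn_mull.
have hdD : (`|denq x| <= D)%N by apply: dvdn_leq.
split => //.
by rewrite -(leq_pmul2r D0) hn leq_mul2l hdD orbT.
Qed.

Lemma some_succP (V : finType) (E : rel V) v : (exists w, E v w) -> E v (some_succ E v).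
Proof.
case=> w hw; rewrite /some_succ; case: pickP => [y hy|h] //=.
by move: (h w); rewrite hw.
Qed.

Lemma opt_succP (V : finType) (V0 : {set V}) (E : rel V) v f (P : rat -> Prop) :
  (exists w, E v w) -> (forall w, E v w -> P (f w)) -> P (opt_succ V0 E v f).
Proof.
move=> /some_succP hs hP; rewrite /opt_succ; case: ifP => _.
  apply: (big_ind P); [exact: hP | | exact: hP].
  by move=> x y Px Py; rewrite /Num.max; case: ifP.
apply: (big_ind P); [exact: hP | | exact: hP].
by move=> x y Px Py; rewrite /Num.min; case: ifP.
Qed.

Lemma opt_succE (V : finType) (V0 : {set V}) (E : rel V) v f :
  (exists w, E v w) -> exists w', E v w' /\ opt_succ V0 E v f = f w'.
Proof.
move=> h; apply: (@opt_succP V V0 E v f (fun x => exists w', E v w' /\ x = f w')) => //.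
by move=> w hw; exists w.
Qed.

Lemma gamma_le (V : finType) (E : rel V) gamma v w : E v w ->
  (`|gamma v w| <= maxabs E gamma)%N.
Proof. move=> h; rewrite /maxabs. set F := (fun e : V * V => `|gamma e.1 e.2|%N). have := @leq_bigmax_cond _ (fun e : V * V => E e.1 e.2) F (v, w) h. by rewrite /F /=. Qed.

Lemma wt_inv (V : finType) (V0 : {set V}) (E : rel V) gamma (p q : nat) :
  (forall v : V, exists w : V, E v w) -> (0 < q)%N -> (q < p)%N ->
  forall j w, (0 < j)%N -> exists N : int,
    wt V0 E gamma p q j w = N%:~R / (p ^ j.-1)%:R /\
    (`|N| <= maxabs E gamma * j * p ^ j.-1)%N.
Proof.
move=> tot q0 qp; elim=> [//|[|i] IH] w _.
  rewrite /=; have [w' [hw' ->]] := @opt_succE V V0 E w (fun w' => (gamma w w')%:~R) (tot w).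
  exists (gamma w w'); rewrite /= divr1; split => //.
  by rewrite !muln1; apply: gamma_le.
rewrite /=; have [w' [hw' ->]] := @opt_succE V V0 E w (fun w' => (gamma w w')%:~R + wt V0 E gamma p q i.+1 w' / (p%:R / q%:R)) (tot w).
have [N [hN bN]] := IH w' isT; rewrite /= in bN; rewrite -/(wt V0 E gamma p q i.+1 w') in hN; change (i.+1.-1) with i in hN.
exists (gamma w w' * (p ^ i.+1)%:Z + N * q%:Z); split.
  rewrite hN.
  have hp : (p%:R : rat) != 0 by rewrite pnatr_eq0 -lt0n (leq_trans _ qp).
  have hq : (q%:R : rat) != 0 by rewrite pnatr_eq0 -lt0n.
  rewrite rmorphD !rmorphM /= -!pmulrn !natrX exprS.
  have hpi : (p%:R : rat) ^+ i != 0 by rewrite expf_neq0.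
  move: hpi; set P := (p%:R : rat) ^+ i => hpi. field. by rewrite hp hq hpi.
have g := @gamma_le V E gamma w w' hw'.
set m := maxabs E gamma in g bN *.
have h1 : (`|gamma w w'| * p ^ i.+1 <= m * p ^ i.+1)%N by rewrite leq_mul2r g orbT.
have h2 : (`|N| * q <= m * i.+1 * p ^ i * p)%N by apply: leq_mul => //; exact: ltnW.
rewrite expnS in h1 *.
nia.
Qed.

Lemma expn_mono m n e : (m <= n)%N -> (m ^ e <= n ^ e)%N.
Proof. move=> h; elim: e => // e IH; rewrite !expnS; exact: leq_mul. Qed.

Lemma blen_lt n t : (n < 2 ^ t)%N -> (0 < t)%N -> (blen n <= t)%N.
Proof.
move=> h t0; rewrite /blen; case: n h => [|n] h; first by rewrite trunc_log0.
have := trunc_logP (isT : (1 < 2)%N) (isT : (0 < n.+1)%N).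
move=> h2; have h3 := leq_ltn_trans h2 h.
by rewrite ltn_exp2l in h3.
Qed.

Lemma blen_ltn n : (n < 2 ^ blen n)%N.
Proof. exact: trunc_log_ltn. Qed.

Lemma mul_lt a b c d : (a < b)%N -> (c <= d)%N -> (0 < d)%N -> (a * c < b * d)%N.
Proof. move=> *; nia. Qed.

Lemma blen_mono m n : (m <= n)%N -> (blen m <= blen n)%N.
Proof. by move=> h; rewrite /blen ltnS leq_trunc_log. Qed.
Arguments blen_mono {m n}.

Lemma blen_mul a b : (blen (a * b) <= blen a + blen b)%N.
Proof.
apply: blen_lt; last by rewrite addn_gt0.
by rewrite expnD ltn_mul // blen_ltn.
Qed.

Lemma blen_exp a e : (blen (a ^ e) <= e * blen a + 1)%N.
Proof.
elim: e => [|e IH]; first by rewrite expn0 /blen trunc_log1.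
rewrite expnS; apply: leq_trans (blen_mul _ _) _; rewrite mulSn; lia.
Qed.

Lemma blen_self n : (0 < n)%N -> (blen n <= n)%N.
Proof. by move=> n0; apply: blen_lt => //; apply: ltn_expl. Qed.

Lemma ar1 (A L M k b : nat) : (A <= M -> L <= M -> 1 <= L -> b <= A.+1 + k.+1 + (k * L.+1 + 1) -> b <= 5 * k.+2 * M)%N.
Proof. move=> *; nia. Qed.
Lemma ar2 (L k b : nat) : (1 <= L -> b <= k * L.+1 + 1 -> b <= 2 * k.+2 * L)%N.
Proof. move=> *; nia. Qed.
Lemma ar3 (L k b c : nat) : (1 <= L -> b <= 2 * k.+2 * L -> c <= b + L.+1 -> c <= 4 * k.+2 * L)%N.
Proof. move=> *; nia. Qed.
Lemma ar4 (A L M k b c d : nat) : (A <= M -> L <= M -> 1 <= L -> b <= A.+1 -> c <= 4 * k.+2 * L -> d <= b + c -> d <= 6 * k.+2 * M * L)%N.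
Proof. move=> *; nia. Qed.
Lemma ar5 (L M k b c d : nat) : (L <= M -> 1 <= L -> b <= 5 * k.+2 * M -> c <= L.+1 -> d <= b + c -> d <= 7 * k.+2 * M * L)%N.
Proof. move=> *; nia. Qed.
Lemma ar6 (K L M x1 x2 x3 x4 x5 : nat) : (x1 <= 5 * K * M * (2 * L) -> x2 <= 2 * K * L * (2 * M) -> x3 <= 2 * M * (4 * K * L) -> x4 <= 6 * K * M * L -> x5 <= 7 * K * M * L -> x1 + x2 + x3 + (x4 + x5) <= 40 * K * L * M)%N.
Proof. move=> *; lia. Qed.

Arguments ar1 {A L M k b}.
Arguments ar2 {L k b}.
Arguments ar3 {L k b c}.
Arguments ar4 {A L M k b c d}.
Arguments ar5 {L M k b c d}.
Arguments ar6 {K L M x1 x2 x3 x4 x5}.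

Theorem lemma5 : exists C : nat,
  forall (V : finType) (V0 : {set V}) (vinit : V) (E : rel V)
         (gamma : V -> V -> int) (p q : nat),
  (forall v : V, exists w : V, E v w) ->
  (0 < maxabs E gamma)%N ->
  (0 < q)%N -> (q < p)%N ->
  forall (k : nat) (v w : V), (0 < k)%N -> E v w ->
    ((comp_result V0 E gamma p q k v w).2 != 0 /\
     (comp_result V0 E gamma p q k v w).1%:~R
       / (comp_result V0 E gamma p q k v w).2%:~R
       = costk V0 E gamma p q k v w :> rat) /\
    (comp_cost V0 E gamma p q k v w
       <= C * k * trunc_log 2 p * maxn (trunc_log 2 (maxabs E gamma)) (trunc_log 2 p))%N.
Proof.
exists 40%N => V V0 vinit E gamma p q tot mu0 q0 qp k v w k0 hvw.
have p0 : (0 < p)%N by apply: leq_trans qp.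
case: k k0 => [//|[|k']] _.
  by rewrite /= divr1.
rewrite /comp_result /comp_cost /costk /step_result /step_cost.
set x := wt V0 E gamma p q k'.+1 w.
have hx := divq_num_den x.
set r := numq x in hx *; set s := denq x in hx *.
have s0 : s != 0 by apply: denq_neq0.
have hp : (p%:R : rat) != 0 by rewrite pnatr_eq0 -lt0n.
have hq : (q%:R : rat) != 0 by rewrite pnatr_eq0 -lt0n.
split.
  split; first by rewrite mulf_neq0 // -lt0n.
  rewrite -[in RHS]hx rmorphD !rmorphM /= -!pmulrn.
  have hs : (s%:~R : rat) != 0 by rewrite intr_eq0.
  field. by rewrite hs hp hq.
have [N [hN bN]] := @wt_inv V V0 E gamma p q tot q0 qp k'.+1 w isT.
rewrite -/x /= in hN bN.
have Pp : (0 < p ^ k')%N by rewrite expn_gt0 p0.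
have [bs br] := @frac_bound x N (p ^ k') Pp hN.
rewrite -/r -/s in bs br.
rewrite /mul_cost /add_cost /zlen !abszM !absz_nat.
have hg := @gamma_le V E gamma v w hvw.
set mu := maxabs E gamma in bN hg mu0 *.
set L := trunc_log 2 p. set A := trunc_log 2 mu.
set R := `|r|%N in br *; set S := `|s|%N in bs *; set G := `|gamma v w|%N in hg *.
have bp : blen p = L.+1 by [].
have bmu : blen mu = A.+1 by [].
have L1 : (1 <= L)%N by rewrite /L trunc_log_gt0 /=; lia.
set M := maxn A L.
have AM : (A <= M)%N by rewrite leq_maxl.
have LM : (L <= M)%N by rewrite leq_maxr.
set K := k'.+2.
have hR : (blen R <= A.+1 + k'.+1 + (k' * L.+1 + 1))%N.
  apply: leq_trans (blen_mono (leq_trans br bN)) _.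
  have := blen_mul (mu * k'.+1) (p ^ k'); have := blen_mul mu k'.+1.
  have := blen_exp p k'; have := @blen_self k'.+1 isT. lia.
have hS : (blen S <= k' * L.+1 + 1)%N.
  have := blen_exp p k'; have := blen_mono bs. lia.
have hQ : (blen q <= L.+1)%N by rewrite -bp; apply: blen_mono; apply: ltnW.
have hG : (blen G <= A.+1)%N by rewrite -bmu; apply: blen_mono.
have hSp := blen_mul S p.
have hGSp := blen_mul G (S * p).
have hRq := blen_mul R q.
have hR' := ar1 AM LM L1 hR.
have hQ' : (blen q <= 2 * L)%N by lia.
have hS' := ar2 L1 hS.
have hp' : (blen p <= 2 * M)%N by lia.
have hG' : (blen G <= 2 * M)%N by lia.
rewrite bp in hSp.
have hSp' := ar3 L1 hS' hSp.
have hGSp' := ar4 AM LM L1 hG hSp' hGSp.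
have hRq' := ar5 LM L1 hR' hQ hRq.
have t1 := leq_mul hR' hQ'.
have t2 := leq_mul hS' hp'.
have t3 := leq_mul hG' hSp'.
exact: (ar6 t1 t2 t3 hGSp' hRq').
Qed.
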